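(* Let $G$ be a group with finite generating set $S$. Then $G$ is a torsion group if and only if the skeleton subshift $X_{G,S}$ is aperiodic.
   Context: A group is torsion if every element has finite order. The skeleton subshift $X_{G,S}\subseteq(S\cup S^{-1})^{\mathbb{Z}}$ is the set of bi-infinite sequences none of whose non-empty finite factors $x_ix_{i+1}\cdots x_j$ represents $1_G$. With the shift $\sigma(x)_i=x_{i+1}$, a sequence $x$ is periodic if $\sigma^k(x)=x$ for some $k\neq0$; a set of sequences is aperiodic if it contains no periodic sequence. *)

(* Defs.v *)
From Stdlib Require Import ZArith List.
Import ListNotations.
Open Scope Z_scope.

Record is_group (G : Type) (mul : G -> G -> G) (inv : G -> G) (one : G) : Prop := {
  grp_assoc : forall a b c, mul a (mul b c) = mul (mul a b) c;
  grp_id_l : forall a, mul one a = a;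
  grp_id_r : forall a, mul a one = a;
  grp_inv_l : forall a, mul (inv a) a = one;
  grp_inv_r : forall a, mul a (inv a) = one
}.

Definition gprod {G : Type} (mul : G -> G -> G) (one : G) (l : list G) : G :=
  fold_right mul one l.

Definition in_sym {G : Type} (inv : G -> G) (S : list G) (a : G) : Prop :=
  In a S \/ exists s, In s S /\ a = inv s.

Definition generates {G : Type} (mul : G -> G -> G) (inv : G -> G) (one : G)
  (S : list G) : Prop :=
  forall g : G, exists l : list G, Forall (in_sym inv S) l /\ gprod mul one l = g.

Fixpoint gpow {G : Type} (mul : G -> G -> G) (one : G) (g : G) (n : nat) : G :=
  match n with O => one | S m => mul g (gpow mul one g m) end.

Definition torsion {G : Type} (mul : G -> G -> G) (one : G) : Prop :=
  forall g : G, exists n : nat, (0 < n)%nat /\ gpow mul one g n = one.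

(* The factor x_i x_{i+1} ... x_{i+n} (length n+1, i.e. x_i ... x_j with j = i+n). *)
Definition factor {G : Type} (mul : G -> G -> G) (one : G) (x : Z -> G)
  (i : Z) (n : nat) : G :=
  gprod mul one (map (fun k => x (i + Z.of_nat k)) (seq 0 (S n))).

Definition skeleton {G : Type} (mul : G -> G -> G) (inv : G -> G) (one : G)
  (S : list G) (x : Z -> G) : Prop :=
  (forall i : Z, in_sym inv S (x i)) /\
  (forall (i : Z) (n : nat), factor mul one x i n <> one).

Definition shift {A : Type} (x : Z -> A) : Z -> A := fun i => x (i + 1).

Definition periodic {A : Type} (x : Z -> A) : Prop :=
  exists k : Z, k <> 0 /\ forall i : Z, x (i + k) = x i.

Definition aperiodic {A : Type} (X : (Z -> A) -> Prop) : Prop :=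
  ~ exists x, X x /\ periodic x.

(* Main.v *)
Require Import Defs.
From Stdlib Require Import ZArith List.
From Stdlib Require Import Lia Arith Classical.

Definition pi {G : Type} (mul : G -> G -> G) (one : G) (x : Z -> G) (k : nat) : G :=
  gprod mul one (map (fun t => x (Z.of_nat t)) (seq 0 k)).

Definition fo {G : Type} (mul : G -> G -> G) (one : G) (h : G) : Prop :=
  exists m : nat, (0 < m)%nat /\ gpow mul one h m = one.

Lemma gprod_app (G : Type) (mul : G -> G -> G) (inv : G -> G) (one : G)
  (HG : is_group G mul inv one) (l1 l2 : list G) :
  gprod mul one (l1 ++ l2) = mul (gprod mul one l1) (gprod mul one l2).
Proof.
  induction l1 as [|a l1 IH]; simpl.
  - now rewrite (grp_id_l _ _ _ _ HG).
  - rewrite IH. apply (grp_assoc _ _ _ _ HG).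
Qed.

Lemma map_seq_shift {A : Type} (f : nat -> A) (b a : nat) :
  map f (seq a b) = map (fun t => f (a + t)%nat) (seq 0 b).
Proof.
  revert a f. induction b as [|b IH]; intros a f; simpl; [reflexivity|].
  rewrite Nat.add_0_r. f_equal.
  rewrite (IH (S a) f), (IH 1%nat (fun t => f (a + t)%nat)).
  apply map_ext. intros t. f_equal. lia.
Qed.

Lemma pi_add (G : Type) (mul : G -> G -> G) (inv : G -> G) (one : G)
  (HG : is_group G mul inv one) (x : Z -> G) (a b : nat) :
  pi mul one x (a + b) =
  mul (pi mul one x a) (gprod mul one (map (fun t => x (Z.of_nat a + Z.of_nat t)%Z) (seq 0 b))).
Proof.
  unfold pi. rewrite seq_app, map_app, (gprod_app _ _ _ _ HG). f_equal.
  rewrite map_seq_shift. simpl. f_equal. apply map_ext. intros t. f_equal. lia.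
Qed.

Lemma pi_factor (G : Type) (mul : G -> G -> G) (inv : G -> G) (one : G)
  (HG : is_group G mul inv one) (x : Z -> G) (a m : nat) :
  pi mul one x (a + S m) = mul (pi mul one x a) (factor mul one x (Z.of_nat a) m).
Proof. rewrite (pi_add _ _ _ _ HG). reflexivity. Qed.

Lemma pi_period (G : Type) (mul : G -> G -> G) (inv : G -> G) (one : G)
  (HG : is_group G mul inv one) (x : Z -> G) (p : nat)
  (Hp : forall i, x (i + Z.of_nat p)%Z = x i) (k : nat) :
  pi mul one x (p + k) = mul (pi mul one x p) (pi mul one x k).
Proof.
  rewrite (pi_add _ _ _ _ HG). f_equal. unfold pi. f_equal. apply map_ext.
  intros t. rewrite Z.add_comm. apply Hp.
Qed.

Lemma pi_period_pow (G : Type) (mul : G -> G -> G) (inv : G -> G) (one : G)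
  (HG : is_group G mul inv one) (x : Z -> G) (p : nat)
  (Hp : forall i, x (i + Z.of_nat p)%Z = x i) (q k : nat) :
  pi mul one x (q * p + k) = mul (gpow mul one (pi mul one x p) q) (pi mul one x k).
Proof.
  induction q as [|q IH]; simpl.
  - now rewrite (grp_id_l _ _ _ _ HG).
  - rewrite <- Nat.add_assoc, (pi_period _ _ _ _ HG x p Hp), IH.
    apply (grp_assoc _ _ _ _ HG).
Qed.

Lemma gpow_add (G : Type) (mul : G -> G -> G) (inv : G -> G) (one : G)
  (HG : is_group G mul inv one) (g : G) (a b : nat) :
  gpow mul one g (a + b) = mul (gpow mul one g a) (gpow mul one g b).
Proof.
  induction a as [|a IH]; simpl.
  - now rewrite (grp_id_l _ _ _ _ HG).
  - rewrite IH. apply (grp_assoc _ _ _ _ HG).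
Qed.

Lemma gpow_mul (G : Type) (mul : G -> G -> G) (inv : G -> G) (one : G)
  (HG : is_group G mul inv one) (g : G) (a b : nat) :
  gpow mul one (gpow mul one g a) b = gpow mul one g (a * b).
Proof.
  induction b as [|b IH]; simpl.
  - now rewrite Nat.mul_0_r.
  - rewrite IH, <- (gpow_add _ _ _ _ HG). f_equal. lia.
Qed.

Lemma conj_pow (G : Type) (mul : G -> G -> G) (inv : G -> G) (one : G)
  (HG : is_group G mul inv one) (c h a : G) (m : nat) :
  mul c h = mul a c -> mul c (gpow mul one h m) = mul (gpow mul one a m) c.
Proof.
  intros H. induction m as [|m IH]; simpl.
  - now rewrite (grp_id_l _ _ _ _ HG), (grp_id_r _ _ _ _ HG).
  - rewrite (grp_assoc _ _ _ _ HG), H, <- (grp_assoc _ _ _ _ HG), IH.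
    apply (grp_assoc _ _ _ _ HG).
Qed.

Lemma rcancel (G : Type) (mul : G -> G -> G) (inv : G -> G) (one : G)
  (HG : is_group G mul inv one) (u v c : G) : mul u c = mul v c -> u = v.
Proof.
  intros H.
  rewrite <- (grp_id_r _ _ _ _ HG u), <- (grp_id_r _ _ _ _ HG v),
    <- (grp_inv_r _ _ _ _ HG c), !(grp_assoc _ _ _ _ HG), H. reflexivity.
Qed.

Lemma minimal_word (G : Type) (mul : G -> G -> G) (inv : G -> G) (one : G)
  (S : list G) : forall n (l : list G), length l = n -> Forall (in_sym inv S) l ->
  ~ fo mul one (gprod mul one l) ->
  exists l, Forall (in_sym inv S) l /\ ~ fo mul one (gprod mul one l) /\
    forall l', Forall (in_sym inv S) l' -> (length l' < length l)%nat -> fo mul one (gprod mul one l').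
Proof.
  intros n. induction n as [n IH] using (well_founded_induction lt_wf).
  intros l Hl Hs Hf.
  destruct (classic (exists l', Forall (in_sym inv S) l' /\ (length l' < length l)%nat /\
      ~ fo mul one (gprod mul one l'))) as [[l' [H1 [H2 H3]]]|Hno].
  - apply (IH (length l') ltac:(lia) l' eq_refl H1 H3).
  - exists l. split; [exact Hs|]. split; [exact Hf|].
    intros l' H1 H2. apply NNPP. intros H3. apply Hno. eauto.
Qed.

Lemma map_nth_seq_eq {A : Type} (l : list A) (d : A) (f : nat -> A) :
  (forall t, (t < length l)%nat -> f t = nth t l d) ->
  map f (seq 0 (length l)) = l.
Proof.
  intros H. apply (nth_ext _ _ (f 0%nat) d).
  - now rewrite length_map, length_seq.
  - intros t Ht. rewrite length_map, length_seq in Ht.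
    rewrite map_nth, seq_nth by exact Ht. simpl. now apply H.
Qed.

Theorem proposition9 (G : Type) (mul : G -> G -> G) (inv : G -> G) (one : G)
  (HG : is_group G mul inv one) (S : list G) (HS : generates mul inv one S) :
  torsion mul one <-> aperiodic (skeleton mul inv one S).
Proof.
  split.
  - intros Htor [x [[Hsym Hnf] [k [Hk Hper]]]].
    assert (Hp : exists p : nat, (0 < p)%nat /\ forall i, x (i + Z.of_nat p)%Z = x i).
    { destruct (Z_lt_le_dec 0 k) as [Hlt|Hle].
      - exists (Z.to_nat k). split; [lia|]. intros i. rewrite Z2Nat.id by lia. apply Hper.
      - exists (Z.to_nat (- k)). split; [lia|]. intros i. rewrite Z2Nat.id by lia.
        rewrite <- (Hper (i + - k)%Z). f_equal. lia. }
    destruct Hp as [p [Hp0 Hp]].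
    destruct (Htor (pi mul one x p)) as [N [HN0 HN]].
    pose proof (pi_period_pow _ _ _ _ HG x p Hp N 0) as E.
    rewrite HN, (grp_id_l _ _ _ _ HG) in E.
    replace (N * p + 0)%nat with (0 + Datatypes.S (N * p - 1))%nat in E by nia.
    rewrite (pi_factor _ _ _ _ HG) in E. unfold pi in E at 2. simpl in E.
    rewrite (grp_id_l _ _ _ _ HG) in E.
    apply (Hnf 0%Z (N * p - 1)%nat). simpl in E. exact E.
  - intros Hap g. apply NNPP. intros Hng.
    destruct (HS g) as [l0 [Hl0 Hg0]].
    assert (Hnfo : ~ fo mul one (gprod mul one l0)) by (rewrite Hg0; exact Hng).
    destruct (minimal_word G mul inv one S _ l0 eq_refl Hl0 Hnfo) as [l [Hls [Hlf Hmin]]].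
    clear g Hng l0 Hl0 Hg0 Hnfo.
    set (n := length l) in *.
    assert (Hn : (0 < n)%nat).
    { destruct l as [|a l']; [|simpl in n; subst n; lia].
      exfalso. apply Hlf. exists 1%nat. split; [lia|]. simpl. apply (grp_id_l _ _ _ _ HG). }
    set (x := fun i : Z => nth (Z.to_nat (i mod Z.of_nat n)) l one).
    assert (Hper : forall i, x (i + Z.of_nat n)%Z = x i).
    { intros i. unfold x. f_equal. f_equal.
      replace (i + Z.of_nat n)%Z with (i + 1 * Z.of_nat n)%Z by lia.
      apply Z_mod_plus_full. }
    assert (Hg : pi mul one x n = gprod mul one l).
    { unfold pi. f_equal. apply (map_nth_seq_eq l one). intros t Ht. unfold x.
      rewrite Z.mod_small by lia. now rewrite Nat2Z.id. }
    apply Hap. exists x. split; [split|].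
    + intros i. unfold x. rewrite Forall_forall in Hls. apply Hls. apply nth_In.
      pose proof (Z.mod_pos_bound i (Z.of_nat n) ltac:(lia)). fold n. lia.
    + intros i m Hfac.
      set (a := Z.to_nat (i mod Z.of_nat n)).
      assert (Ha : (a < n)%nat).
      { pose proof (Z.mod_pos_bound i (Z.of_nat n) ltac:(lia)). unfold a. lia. }
      assert (Hfa : factor mul one x (Z.of_nat a) m = one).
      { transitivity (factor mul one x i m); [|exact Hfac]. unfold factor. f_equal. apply map_ext. intros t. unfold x.
        unfold a. rewrite Z2Nat.id by (apply Z.mod_pos_bound; lia).
        now rewrite Zplus_mod_idemp_l. }
      pose proof (pi_factor _ _ _ _ HG x a m) as E1.
      rewrite Hfa, (grp_id_r _ _ _ _ HG) in E1.
      set (q := (m / n)%nat). set (r := (m mod n)%nat).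
      assert (Hm : m = (n * q + r)%nat) by (apply Nat.div_mod; lia).
      assert (Hr : (r < n)%nat) by (apply Nat.mod_upper_bound; lia).
      set (j := (a + r + 1)%nat).
      pose proof (pi_period_pow _ _ _ _ HG x n Hper q j) as E2.
      replace (q * n + j)%nat with (a + Datatypes.S m)%nat in E2 by (subst j; lia).
      rewrite E1 in E2.
      set (w := map (fun t => x (Z.of_nat j + Z.of_nat t)%Z) (seq 0 (n - r - 1))).
      assert (Hw : Forall (in_sym inv S) w).
      { unfold w. rewrite Forall_forall. intros y Hy. apply in_map_iff in Hy.
        destruct Hy as [t [<- _]]. unfold x. rewrite Forall_forall in Hls. apply Hls.
        apply nth_In. pose proof (Z.mod_pos_bound (Z.of_nat j + Z.of_nat t) (Z.of_nat n) ltac:(lia)).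
        fold n. lia. }
      assert (Hwl : (length w < length l)%nat).
      { unfold w. rewrite length_map, length_seq. fold n. lia. }
      destruct (Hmin w Hw Hwl) as [mm [Hmm0 Hmm]].
      pose proof (pi_add _ _ _ _ HG x j (n - r - 1)) as E3. fold w in E3.
      replace (j + (n - r - 1))%nat with (n + a)%nat in E3 by (subst j; lia).
      rewrite (pi_period _ _ _ _ HG x n Hper), E2, Hg in E3.
      rewrite (grp_assoc _ _ _ _ HG) in E3.
      change (mul (gprod mul one l) (gpow mul one (gprod mul one l) q))
        with (gpow mul one (gprod mul one l) (Datatypes.S q)) in E3.
      symmetry in E3.
      pose proof (conj_pow _ _ _ _ HG _ _ _ mm E3) as E4.
      rewrite Hmm, (grp_id_r _ _ _ _ HG) in E4.
      rewrite <- (grp_id_l _ _ _ _ HG (pi mul one x j)) in E4 at 1.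
      apply (rcancel _ _ _ _ HG) in E4.
      rewrite (gpow_mul _ _ _ _ HG) in E4.
      apply Hlf. exists (Datatypes.S q * mm)%nat. split; [nia|]. now symmetry.
    + exists (Z.of_nat n). split; [lia|]. exact Hper.
Qed.
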